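(* For all integers $k\ge 1$ and $t\ge 1$, $$B_0(k,2t)+B_1(k+1,2t+1)=B_0(k,2t-2k)+p_{de}(2t-k)+p_{do}(2t-2k).$$
   Context: For a partition $\pi$, $s(\pi)$ is its smallest part. For $j\ge1$, $\mathrm{Spt}j_{do}(n)$ is the set of partitions $\pi$ of $n$ in which $s(\pi)$ occurs exactly $j$ times and the remaining parts (those larger than $s(\pi)$) are pairwise distinct and each has parity different from that of $s(\pi)$. $B_0(j,n)$ (resp. $B_1(j,n)$) is the number of $\pi\in\mathrm{Spt}j_{do}(n)$ whose number of parts greater than $s(\pi)$ is even (resp. odd); $B_0(j,n)=B_1(j,n)=0$ for $n\le 0$. $p_{de}(n)$ (resp. $p_{do}(n)$) is the number of partitions of $n$ into distinct even (resp. distinct odd) parts, with value $1$ at $n=0$ and $0$ for $n<0$. *)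

(* Defs.v *)
From mathcomp Require Import all_boot all_order all_algebra.
Set Implicit Arguments. Unset Strict Implicit. Unset Printing Implicit Defensive.

(* A partition of n is represented by its multiplicity vector:
   m : {ffun 'I_n -> 'I_n.+1}, where m i is the number of times the part
   (i.+1) occurs; it is a partition of n iff sum_i (i.+1) * m i = n. *)
Definition mpart (n : nat) := {ffun 'I_n -> 'I_n.+1}.

Definition is_partition (n : nat) (m : mpart n) : bool :=
  \sum_(i < n) i.+1 * (m i : nat) == n.

(* pi in Spt j_do(n), with smallest part s.+1 (index s), and the number of
   parts larger than the smallest part has parity b. *)
Definition sptjdo_par (j n : nat) (b : bool) (m : mpart n) : bool :=
  is_partition m &&
  [exists s : 'I_n,
    [&& 0 < (m s : nat), (m s : nat) == j,
        [forall i : 'I_n, (i < s) ==> ((m i : nat) == 0)],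
        [forall i : 'I_n, (s < i) ==>
            (((m i : nat) <= 1) && ((0 < (m i : nat)) ==> (odd i.+1 != odd s.+1)))]
      & odd (\sum_(i < n | s < i) (m i : nat)) == b]].

Definition Bcount (b : bool) (j n : nat) : nat :=
  #|[set m : mpart n | sptjdo_par j b m]|.

Definition B0 (j : nat) (n : int) : nat :=
  match n with Posz m => Bcount false j m | Negz _ => 0 end.
Definition B1 (j : nat) (n : int) : nat :=
  match n with Posz m => Bcount true j m | Negz _ => 0 end.

Definition distinct_par (odd_parts : bool) (n : nat) (m : mpart n) : bool :=
  is_partition m &&
  [forall i : 'I_n, ((m i : nat) <= 1) &&
                    ((0 < (m i : nat)) ==> (odd i.+1 == odd_parts))].

Definition pdcount (odd_parts : bool) (n : nat) : nat :=
  #|[set m : mpart n | distinct_par odd_parts m]|.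

Definition pde (n : int) : nat :=
  match n with Posz m => pdcount false m | Negz _ => 0 end.
Definition pdo (n : int) : nat :=
  match n with Posz m => pdcount true m | Negz _ => 0 end.

(* Main.v *)
Require Import Defs.
From mathcomp Require Import all_boot all_order all_algebra.
From mathcomp Require Import zify.
Import GRing.Theory.
Set Implicit Arguments. Unset Strict Implicit. Unset Printing Implicit Defensive.

Lemma bij_card (T1 T2 : finType) (X : {set T1}) (Y : {set T2})
  (f : T1 -> T2) (g : T2 -> T1) :
  {in X, forall x, f x \in Y} -> {in Y, forall y, g y \in X} ->
  {in X, cancel f g} -> {in Y, cancel g f} -> #|X| = #|Y|.
Proof.
move=> fXY gYX fK gK; apply/eqP; rewrite eqn_leq; apply/andP; split.
- rewrite -(card_in_imset (f:=f)); last first.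
    by move=> x y Hx Hy E; rewrite -(fK x Hx) -(fK y Hy) E.
  apply: subset_leq_card; apply/subsetP=> y /imsetP[x Hx ->]; exact: fXY.
- rewrite -(card_in_imset (f:=g)); last first.
    by move=> x y Hx Hy E; rewrite -(gK x Hx) -(gK y Hy) E.
  apply: subset_leq_card; apply/subsetP=> y /imsetP[x Hx ->]; exact: gYX.
Qed.

Section W.
Variable N' : nat.
Local Notation N := N'.+1.
Local Notation T := ('I_N * {set 'I_N})%type.

Definition sumD (D : {set 'I_N}) : nat := \sum_(i in D) (i : nat).
Definition sgood (j : nat) (b : bool) (x : T) : bool :=
  [&& 0 < x.1, [forall i in x.2, (x.1 < i) && (odd i != odd x.1)] & odd #|x.2| == b].
Definition SB j b c a := [set x : T | sgood j b x && (j * x.1 + sumD x.2 + c == a)].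
Definition dgood o (D : {set 'I_N}) := [forall i in D, (0 < i) && (odd i == o)].
Definition PD o c a := [set D | dgood o D && (sumD D + c == a)].

Lemma sumD_ge (D : {set 'I_N}) (e : 'I_N) : e \in D -> e <= sumD D.
Proof. by move=> He; rewrite /sumD (bigD1 e) //= leq_addr. Qed.

Lemma sumD_D1 (D : {set 'I_N}) (e : 'I_N) : e \in D -> sumD D = e + sumD (D :\ e).
Proof. by move=> He; rewrite /sumD (big_setD1 e). Qed.

Lemma odd_sumD (D : {set 'I_N}) : {in D, forall i : 'I_N, odd i} -> odd (sumD D) = odd #|D|.
Proof.
move=> H; rewrite /sumD (big_morph odd oddD (erefl : odd 0 = false)) -sum1_card.
rewrite (big_morph odd oddD (erefl : odd 0 = false)).
by apply: eq_bigr => i Hi; rewrite H.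
Qed.


Lemma sgoodP j b (s : 'I_N) (D : {set 'I_N}) :
  reflect [/\ 0 < s, (forall i, i \in D -> s < i /\ odd i != odd s) & odd #|D| = b]
          (sgood j b (s, D)).
Proof.
apply: (iffP and3P) => [[H1 /forall_inP H2 /eqP H3]|[H1 H2 H3]]; split => //.
- by move=> i /H2 /andP.
- by apply/forall_inP => i /H2 [-> ->].
- exact/eqP.
Qed.

Lemma inordN (m : nat) : m < N -> ((inord m : 'I_N) : nat) = m.
Proof. exact: inordK. Qed.

Lemma odd_m2 s : 2 <= s -> odd (s - 2) = odd s.
Proof. by move=> h; rewrite -{2}(subnK h) oddD addbF. Qed.

Lemma odd_m1 s : 1 <= s -> odd (s - 1) = ~~ odd s.
Proof. by move=> h; rewrite -{2}(subnK h) oddD /= addbT negbK. Qed.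

Lemma mulm2 k s : 2 <= s -> k * (s - 2) + 2 * k = k * s.
Proof. by move=> h; rewrite [2 * k]mulnC -mulnDr subnK. Qed.

Lemma comb3 k a : 0 < k -> a < N ->
  #|[set x in SB k false 0 a | 2 < x.1]| + #|[set x in SB k.+1 true 0 a.+1 | 2 < x.1]|
  = #|SB k false (2 * k) a|.
Proof.
move=> k0 Ha.
set C := SB k false (2 * k) a.
set P := [set x : T | (inord x.1.+1 : 'I_N) \in x.2].
rewrite -(cardsID P C) addnC; congr (_ + _).
- apply: (bij_card (f := fun x : T => (inord (x.1 - 2), inord (x.1 - 1) |: x.2))
                   (g := fun x : T => (inord (x.1 + 2), x.2 :\ inord x.1.+1))).
  + move=> [s D]; rewrite !inE /= => /andP[/andP[/sgoodP[H1 H2 H3] /eqP H4] H5].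
    have hs : s - 2 < N by have := ltn_ord s; lia.
    have hs1 : s - 1 < N by have := ltn_ord s; lia.
    have nD : (inord (s - 1) : 'I_N) \notin D.
      by apply/negP => /H2 [] /=; rewrite inordN //; lia.
    rewrite inordN // -subSn; last by lia.
    have -> : s.+1 - 2 = s - 1 by lia.
    rewrite eqxx orTb andbT; apply/andP; split.
      apply/sgoodP; split; rewrite ?inordN //; first by lia.
        move=> i; rewrite !inE => /orP[/eqP ->|/H2 [Hi1 Hi2]]; rewrite ?inordN //.
          by rewrite odd_m1 ?odd_m2; [split; [lia| by case: odd]|lia|lia].
        by rewrite odd_m2; [split; [lia|]|lia].
      by rewrite cardsU1 nD /= H3.
    rewrite /sumD big_setU1 //= -/(sumD D) inordN //; apply/eqP.
    have := mulm2 k (ltnW H5); rewrite mulSn in H4; lia.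
  + move=> [s D]; rewrite !inE /= => /andP[/andP[/sgoodP[H1 H2 H3] /eqP H4] H5].
    have hs : s + 2 < N.
      suff : s + 2 <= a by move: Ha; lia.
      have := leq_pmull s k0; lia.
    have hs1 : s.+1 < N by lia.
    rewrite inordN //; apply/andP; split; last by lia.
    apply/andP; split; last first.
      apply/eqP; move: H4; rewrite (sumD_D1 H5) inordN //; nia.
    apply/sgoodP; split; rewrite ?inordN //; first by lia.
      move=> i; rewrite !inE => /andP[Hi /H2 [Hi1 Hi2]].
      have Hi3 : i != s.+1 :> nat.
        apply/negP => /eqP Ei; move/negP: Hi; apply; apply/eqP/val_inj.
        by rewrite /= inordN.
      have Hi4 : val i != s + 2.
        by apply/negP => /eqP Ei; move: Hi2; rewrite Ei addn2 /= negbK eqxx.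
      split; first by lia.
      by rewrite addn2 /= negbK.
    by move: H3; rewrite (cardsD1 (inord s.+1)) H5 /= => /negbFE.
  + move=> [s D]; rewrite !inE /= => /andP[/andP[/sgoodP[H1 H2 H3] /eqP H4] H5].
    have hs : s - 2 < N by have := ltn_ord s; lia.
    have hs1 : s - 1 < N by have := ltn_ord s; lia.
    have nD : (inord (s - 1) : 'I_N) \notin D.
      by apply/negP => /H2 [] /=; rewrite inordN //; lia.
    rewrite inordN //= -subSn; last by lia.
    have -> : s.+1 - 2 = s - 1 by lia.
    rewrite setU1K //; congr pair; apply/val_inj; rewrite /= inordN //; lia.
  + move=> [s D]; rewrite !inE /= => /andP[/andP[/sgoodP[H1 H2 H3] /eqP H4] H5].
    have hs : s + 2 < N.
      suff : s + 2 <= a by move: Ha; lia.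
      have := leq_pmull s k0; lia.
    rewrite inordN //=.
    have -> : s + 2 - 1 = s.+1 by lia.
    rewrite setD1K //; congr pair; apply/val_inj; rewrite /= inordN //; lia.
- apply: (bij_card (f := fun x : T => (inord (x.1 - 2), x.2))
                   (g := fun x : T => (inord (x.1 + 2), x.2))).
  + move=> [s D]; rewrite !inE /= => /andP[/andP[/sgoodP[H1 H2 H3] /eqP H4] H5].
    have hs : s - 2 < N by have := ltn_ord s; lia.
    have hs1 : s - 1 < N by have := ltn_ord s; lia.
    apply/andP; split.
      rewrite inordN // -subSn; last by lia.
      have -> : s.+1 - 2 = s - 1 by lia.
      by apply/negP => /H2 [] /=; rewrite inordN //; lia.
    rewrite inordN //; apply/andP; split; last first.
      by apply/eqP; have := mulm2 k (ltnW H5); lia.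
    apply/sgoodP; split; rewrite ?inordN //; first by lia.
    move=> i /H2 [Hi1 Hi2]; rewrite odd_m2; last by lia.
    by split => //; lia.
  + move=> [s D]; rewrite !inE /= => /andP[H5 /andP[/sgoodP[H1 H2 H3] /eqP H4]].
    have hs : s + 2 < N.
      suff : s + 2 <= a by move: Ha; lia.
      have := leq_pmull s k0; lia.
    have hs1 : s.+1 < N by lia.
    rewrite inordN //; apply/andP; split; last by lia.
    apply/andP; split; last by apply/eqP; nia.
    apply/sgoodP; split; rewrite ?inordN //; first by lia.
    move=> i Hi; have [Hi1 Hi2] := H2 i Hi.
    have Hi3 : i != s.+1 :> nat.
      apply/negP => /eqP Ei; move: H5; apply/negP; rewrite negbK.
      by have -> : (inord s.+1 : 'I_N) = i by apply/val_inj; rewrite /= inordN.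
    have Hi4 : val i != s + 2.
      by apply/negP => /eqP Ei; move: Hi2; rewrite Ei addn2 /= negbK eqxx.
    split; first by lia.
    by rewrite addn2 /= negbK.
  + move=> [s D]; rewrite !inE /= => /andP[/andP[/sgoodP[H1 H2 H3] /eqP H4] H5].
    have hs : s - 2 < N by have := ltn_ord s; lia.
    congr pair; apply/val_inj; rewrite /= (inordN hs) inordN; first lia.
    by move: (ltn_ord s); lia.
  + move=> [s D]; rewrite !inE /= => /andP[H5 /andP[/sgoodP[H1 H2 H3] /eqP H4]].
    have hs : s + 2 < N.
      suff : s + 2 <= a by move: Ha; lia.
      have := leq_pmull s k0; lia.
    congr pair; apply/val_inj; rewrite /= (inordN hs) inordN; first lia.
    by move: (ltn_ord s); lia.
Qed.

Lemma dgoodP o (D : {set 'I_N}) :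
  reflect (forall i, i \in D -> 0 < i /\ odd i = o) (dgood o D).
Proof.
apply: (iffP forall_inP) => H i /H; first by case/andP => -> /eqP.
by case=> -> ->; rewrite eqxx.
Qed.

Lemma comb1 k a : 1 < N ->
  #|[set x in SB k false 0 a | x.1 == 1 :> nat]|
  + #|[set x in SB k.+1 true 0 a.+1 | x.1 == 1 :> nat]|
  = #|PD false k a|.
Proof.
move=> N1.
rewrite -(cardsID [set D : {set 'I_N} | odd #|D|] (PD false k a)) addnC.
congr (_ + _).
- apply: (bij_card (f := fun x : T => x.2) (g := fun D => (inord 1, D))).
  + move=> [s D]; rewrite !inE /= => /andP[/andP[/sgoodP[H1 H2 H3] /eqP H4] /eqP H5].
    rewrite H3 andbT; apply/andP; split; last by apply/eqP; lia.
    apply/dgoodP => i /H2 []; rewrite H5 => Hi1 Hi2; split; [lia|by move: Hi2; case: odd].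
  + move=> D; rewrite !inE /= => /andP[/andP[/dgoodP H2 /eqP H4] H3].
    rewrite inordN // eqxx andbT; apply/andP; split; last by apply/eqP; lia.
    apply/sgoodP; split; rewrite ?inordN //.
    move=> i /H2 [Hi1 Hi2]; split; last by rewrite Hi2.
    have : (i : nat) != 1 by apply/negP => /eqP Ei; move: Hi2; rewrite Ei.
    lia.
  + move=> [s D]; rewrite !inE /= => /andP[_ /eqP H5].
    by congr pair; apply/val_inj; rewrite /= inordN.
  + by [].
- apply: (bij_card (f := fun x : T => x.2) (g := fun D => (inord 1, D))).
  + move=> [s D]; rewrite !inE /= => /andP[/andP[/sgoodP[H1 H2 H3] /eqP H4] /eqP H5].
    rewrite H3 /=; apply/andP; split; last by apply/eqP; lia.
    apply/dgoodP => i /H2 []; rewrite H5 => Hi1 Hi2; split; [lia|by move: Hi2; case: odd].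
  + move=> D; rewrite !inE /= => /andP[H3 /andP[/dgoodP H2 /eqP H4]].
    rewrite inordN // eqxx andbT; apply/andP; split; last by apply/eqP; lia.
    apply/sgoodP; split; rewrite ?inordN //; last by apply/negbTE.
    move=> i /H2 [Hi1 Hi2]; split; last by rewrite Hi2.
    have : (i : nat) != 1 by apply/negP => /eqP Ei; move: Hi2; rewrite Ei.
    lia.
  + move=> [s D]; rewrite !inE /= => /andP[_ /eqP H5].
    by congr pair; apply/val_inj; rewrite /= inordN.
  + by [].
Qed.

Lemma neq_inord (i : 'I_N) m : m < N -> (i != inord m) = ((i : nat) != m).
Proof.
by move=> hm; rewrite -(inj_eq val_inj) /= inordN.
Qed.

Lemma comb2 k a : 2 < N -> ~~ odd a ->
  #|[set x in SB k false 0 a | x.1 == 2 :> nat]|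
  + #|[set x in SB k.+1 true 0 a.+1 | x.1 == 2 :> nat]|
  = #|PD true (2 * k) a|.
Proof.
move=> N2 ea.
have h1 : 1 < N by lia.
rewrite -(cardsID [set D : {set 'I_N} | inord 1 \in D] (PD true (2 * k) a)) addnC.
congr (_ + _).
- apply: (bij_card (f := fun x : T => inord 1 |: x.2)
                   (g := fun D => (inord 2, D :\ inord 1))).
  + move=> [s D]; rewrite !inE /= => /andP[/andP[/sgoodP[H1 H2 H3] /eqP H4] /eqP H5].
    have nD : (inord 1 : 'I_N) \notin D.
      by apply/negP => /H2 []; rewrite H5 inordN.
    rewrite eqxx andbT; apply/andP; split.
      apply/dgoodP => i; rewrite !inE => /orP[/eqP ->|/H2 []]; rewrite ?inordN //.
      by rewrite H5 => Hi1 /negbTE Hi2; split; [lia|case: odd Hi2].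
    rewrite /sumD big_setU1 //= -/(sumD D) inordN //; apply/eqP; lia.
  + move=> D; rewrite !inE /= => /andP[/andP[/dgoodP H2 /eqP H4] H5].
    have hc : odd #|D| = false.
      rewrite -odd_sumD; [by move: ea; rewrite -H4 oddD oddM /=; case: odd|].
      by move=> i /H2 [].
    rewrite inordN // eqxx andbT; apply/andP; split.
      apply/sgoodP; split; rewrite ?inordN //.
        move=> i; rewrite !inE neq_inord // => /andP[Hi /H2 [Hi1 Hi2]].
        have : (i : nat) != 2 by apply/negP => /eqP Ei; move: Hi2; rewrite Ei.
        by rewrite Hi2; split => //; lia.
      by move: hc; rewrite (cardsD1 (inord 1)) H5 /= => /negbFE.
    apply/eqP; move: H4; rewrite (sumD_D1 H5) !inordN // mulSn; move: (sumD _) => S. move=> h; clear -h; lia.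
  + move=> [s D]; rewrite !inE /= => /andP[/andP[/sgoodP[H1 H2 H3] /eqP H4] /eqP H5].
    have nD : (inord 1 : 'I_N) \notin D.
      by apply/negP => /H2 []; rewrite H5 inordN.
    by rewrite setU1K //; congr pair; apply/val_inj; rewrite /= inordN.
  + move=> D; rewrite !inE /= => /andP[_ H5].
    by rewrite setD1K.
- apply: (bij_card (f := fun x : T => x.2) (g := fun D => (inord 2, D))).
  + move=> [s D]; rewrite !inE /= => /andP[/andP[/sgoodP[H1 H2 H3] /eqP H4] /eqP H5].
    apply/andP; split.
      by apply/negP => /H2 []; rewrite H5 inordN.
    apply/andP; split; last by apply/eqP; lia.
    apply/dgoodP => i /H2 []; rewrite H5 => Hi1 /negbTE Hi2; split; [lia|by case: odd Hi2].
  + move=> D; rewrite !inE /= => /andP[H5 /andP[/dgoodP H2 /eqP H4]].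
    have hc : odd #|D| = false.
      rewrite -odd_sumD; [by move: ea; rewrite -H4 oddD oddM /=; case: odd|].
      by move=> i /H2 [].
    rewrite inordN // eqxx andbT; apply/andP; split; last by apply/eqP; lia.
    apply/sgoodP; split; rewrite ?inordN //.
    move=> i Hi; have [Hi1 Hi2] := H2 i Hi.
    have : (i : nat) != 1.
      by rewrite -neq_inord //; apply/negP => /eqP E; move: H5; rewrite -E Hi.
    have : (i : nat) != 2 by apply/negP => /eqP Ei; move: Hi2; rewrite Ei.
    by rewrite Hi2; split => //; lia.
  + move=> [s D]; rewrite !inE /= => /andP[_ /eqP H5].
    by congr pair; apply/val_inj; rewrite /= inordN.
  + by [].
Qed.

Lemma L1 n (D : {set 'I_N}) (F : nat -> nat) : n < N ->
  (forall e : 'I_N, e \in D -> 0 < e <= n) ->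
  \sum_(i < n) ((inord i.+1 : 'I_N) \in D) * F i.+1 = \sum_(e in D) F e.
Proof.
move=> hn hD.
pose G e := ((inord e : 'I_N) \in D) * F e.
have -> : \sum_(e in D) F e = \sum_(0 <= e < N) G e.
  rewrite big_mkord big_mkcond /=; apply: eq_bigr => e _.
  by rewrite /G inord_val; case: (e \in D); rewrite ?mul1n ?mul0n.
rewrite (big_ltn (ltn0Sn N')) {1}/G.
have -> : ((inord 0 : 'I_N) \in D) = false.
  by apply/negP => /hD; rewrite inordN.
rewrite mul0n add0n (big_cat_nat (n := n.+1)) //=.
rewrite [X in _ + X]big_nat_cond [X in _ = _ + X]big1 ?addn0; last first.
  move=> e /andP[h1 h2]; rewrite /G.
  have : (inord e : 'I_N) \notin D by apply/negP => /hD; rewrite inordN //; lia.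
  by move/negbTE ->.
by rewrite big_add1 /= big_mkord.
Qed.

Definition frv (s j : nat) (D : {set 'I_N}) (e : nat) : nat :=
  if e == s then j else (((inord e : 'I_N) \in D) : nat).

Lemma frvE s j (D : {set 'I_N}) e : s < N -> (forall d : 'I_N, d \in D -> s < d) ->
  frv s j D e = (e == s) * j + ((inord e : 'I_N) \in D).
Proof.
move=> hs hD; rewrite /frv; case: eqP => [->|_]; last by rewrite mul0n add0n.
have : (inord s : 'I_N) \notin D by apply/negP => /hD; rewrite inordN // ltnn.
by move/negbTE ->; rewrite mul1n addn0.
Qed.

Lemma fr_sum n s j (D : {set 'I_N}) : n < N -> s <= n ->
  (forall d : 'I_N, d \in D -> s < d <= n) ->
  \sum_(i < n) i.+1 * frv s j D i.+1 = j * s + sumD D.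
Proof.
move=> hn hs hD.
have hsN : s < N by lia.
have hD' : forall d : 'I_N, d \in D -> s < d by move=> d /hD /andP[].
transitivity (\sum_(i < n) (i.+1 == s) * (j * i.+1)
              + \sum_(i < n) ((inord i.+1 : 'I_N) \in D) * i.+1).
  rewrite -big_split; apply: eq_bigr => i _ /=; rewrite frvE //.
  by case: (i.+1 == s); case: (_ \in D); rewrite /=; nia.
congr (_ + _); last first.
  rewrite (L1 id) //; move=> e /hD; lia.
case: (posnP s) => [->|s0].
  by rewrite muln0 big1 // => i _.
transitivity (\sum_(i < n) ((inord i.+1 : 'I_N) \in [set (inord s : 'I_N)]) * (j * i.+1)).
  apply: eq_bigr => i _; rewrite in_set1 -(inj_eq val_inj) /= !inordN //; move: (ltn_ord i); lia.
rewrite (L1 (fun e => j * e)) //; last by move=> e; rewrite in_set1 => /eqP ->; rewrite inordN // s0 hs.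
by rewrite big_set1 inordN.
Qed.

Lemma fr_par n s j (D : {set 'I_N}) : n < N -> 0 < s ->
  (forall d : 'I_N, d \in D -> s < d <= n) ->
  \sum_(i < n | s.-1 < i) frv s j D i.+1 = #|D|.
Proof.
move=> hn hs hD.
rewrite big_mkcond /= -sum1_card -(@L1 n D (fun _ => 1)) //; last by move=> e /hD; lia.
apply: eq_bigr => i _; case: ltnP => h.
  by rewrite /frv muln1; case: eqP => //; lia.
have : (inord i.+1 : 'I_N) \notin D.
  by apply/negP => /hD; rewrite inordN; move: (ltn_ord i); lia.
by move/negbTE ->.
Qed.

Definition fr n s j (D : {set 'I_N}) : mpart n :=
  [ffun i : 'I_n => inord (frv s j D i.+1)].

Lemma fr_val n s j (D : {set 'I_N}) (i : 'I_n) : j <= n ->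
  (fr n s j D i : nat) = frv s j D i.+1.
Proof.
move=> hj; rewrite /fr ffunE inordK // ltnS /frv.
case: ifP => _ //; case: (_ \in D) => /=; move: (ltn_ord i); lia.
Qed.

Lemma Gfacts j b s (D : {set 'I_N}) n : 0 < j -> sgood j b (s, D) -> j * s + sumD D = n ->
  [/\ 0 < s, j <= n, s <= n & forall d : 'I_N, d \in D -> s < d <= n].
Proof.
move=> j0 /sgoodP[H1 H2 H3] H4.
have h1 := leq_pmull s j0; have h2 : j <= j * s by rewrite leq_pmulr.
split => //; try lia.
move=> d hd; have := sumD_ge hd; have [hd1 _] := H2 d hd; lia.
Qed.

Lemma frv_lt n (s s2 : 'I_N) j (D D2 : {set 'I_N}) : 0 < j -> 0 < s -> s <= n ->
  s < s2 -> (forall d : 'I_N, d \in D2 -> s2 < d) ->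
  (forall i : 'I_n, frv s j D i.+1 = frv s2 j D2 i.+1) -> False.
Proof.
move=> j0 s0 sn ss2 hD2 Ev.
have hi : (s : nat).-1 < n by lia.
have := Ev (Ordinal hi); rewrite /= prednK // /frv eqxx ifF; last by apply/negbTE; lia.
have : (inord s : 'I_N) \notin D2.
  by apply/negP => /hD2; rewrite inordN //; lia.
by move/negbTE ->; lia.
Qed.

Lemma repB b j n : 0 < j -> n < N ->
  Bcount b j n = #|[set x : T | sgood j b x && (j * x.1 + sumD x.2 == n)]|.
Proof.
move=> j0 hn; set G := [set x : T | _].
rewrite /Bcount.
have -> : [set m : mpart n | sptjdo_par j b m] = [set fr n x.1 j x.2 | x : T in G].
  apply/setP => m; rewrite inE; apply/idP/imsetP.
  - case/andP => Hp /existsP [s' /and5P [Hm0 /eqP Hmj /forallP Hlt /forallP Hgt /eqP Hpar]].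
    set D := [set e : 'I_N | [exists i : 'I_n, [&& s' < i, 0 < m i & (e : nat) == i.+1]]].
    have hsN : s'.+1 < N by move: (ltn_ord s'); lia.
    have memD : forall i : 'I_n, ((inord i.+1 : 'I_N) \in D) = (s' < i) && (0 < m i).
      move=> i; rewrite inE; apply/existsP/andP => [[i' /and3P[h1 h2 /eqP h3]]|[h1 h2]].
        have ei : i = i'.
          apply/val_inj; move: h3; rewrite inordN; first by move=> [].
          by move: (ltn_ord i); lia.
        by subst i'.
      exists i; rewrite h1 h2 inordN ?eqxx //; by move: (ltn_ord i); lia.
    have hD : forall d : 'I_N, d \in D -> s'.+1 < d <= n.
      move=> d; rewrite inE => /existsP [i /and3P[h1 h2 /eqP ->]].
      by move: (ltn_ord i); lia.
    have hj : j <= n by rewrite -Hmj -ltnS ltn_ord.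
    have mE : forall i : 'I_n, (m i : nat) = frv s'.+1 j D i.+1.
      move=> i; rewrite /frv memD eqSS; case: (ltngtP i s') => h.
      - by have := Hlt i; rewrite h /= => /eqP ->.
      - have := Hgt i; rewrite h /= => /andP[h1 _].
        by move: h1; case: (m i : nat) => [|[|]].
      - by rewrite -Hmj; congr nat_of_ord; congr (m _); apply/val_inj.
    exists (inord s'.+1, D); last first.
      apply/ffunP => i; apply/val_inj; rewrite /= fr_val // inordN //.
    rewrite inE /= inordN //; apply/andP; split.
      apply/sgoodP; split; rewrite ?inordN //.
        move=> d hd; split; first by have := hD d hd; lia.
        move: hd; rewrite inE => /existsP [i /and3P[h1 h2 /eqP ->]].
        by have := Hgt i; rewrite h1 /= => /andP[_]; rewrite h2.
      rewrite -(@fr_par n s'.+1 j D) //=.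
      rewrite -Hpar; congr odd; apply: eq_bigr => i _; by rewrite mE.
    have hs1 : s'.+1 <= n := ltn_ord s'.
    apply/eqP; rewrite -(@fr_sum n s'.+1 j D) //.
    transitivity (\sum_(i < n) i.+1 * (m i : nat)); last exact/eqP.
    by apply: eq_bigr => i _; rewrite mE.
  - move=> [[s D]]; rewrite inE /= => /andP[Hg /eqP H4] ->.
    have [H1 H2 H3] := sgoodP _ _ _ _ Hg.
    have [_ hj hs hD] := Gfacts j0 Hg H4.
    have n0 : 0 < n by lia.
    have hsn : (s : nat).-1 < n by lia.
    apply/andP; split.
      rewrite /is_partition (eq_bigr (fun i : 'I_n => i.+1 * frv s j D i.+1)); last first.
        by move=> i _; rewrite fr_val.
      by rewrite fr_sum // H4.
    apply/existsP; exists (Ordinal hsn); apply/and5P; split.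
    + by rewrite fr_val //= prednK // /frv eqxx.
    + by rewrite fr_val //= prednK // /frv eqxx.
    + apply/forallP => i; apply/implyP => /= hi; rewrite fr_val // /frv ifF; last first.
        by apply/negbTE; lia.
      have : (inord i.+1 : 'I_N) \notin D.
        by apply/negP => /hD; rewrite inordN; move: (ltn_ord i); lia.
      by move/negbTE ->.
    + apply/forallP => i; apply/implyP => /= hi; rewrite fr_val // /frv ifF; last first.
        by apply/negbTE; lia.
      case: (boolP (_ \in D)) => //= Hin.
      have [_] := H2 _ Hin; rewrite inordN; last by move: (ltn_ord i); lia.
      by rewrite -[in odd s](prednK H1) /=.
    + rewrite (eq_bigr (fun i : 'I_n => frv s j D i.+1)); last by move=> i _; rewrite fr_val.
      by rewrite /= fr_par // H3.
apply: card_in_imset => -[s D] [s2 D2]; rewrite !inE /=.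
move=> /andP[Hg /eqP H4] /andP[Hg2 /eqP H42] E.
have [H1 H2 H3] := sgoodP _ _ _ _ Hg.
have [H1' H2' H3'] := sgoodP _ _ _ _ Hg2.
have [_ hj hs hD] := Gfacts j0 Hg H4.
have [_ _ hs2 hD2] := Gfacts j0 Hg2 H42.
have Ev : forall i : 'I_n, frv s j D i.+1 = frv s2 j D2 i.+1.
  by move=> i; rewrite -!fr_val // E.
have es : s = s2.
  apply/val_inj; case: (ltngtP s s2) => // h; exfalso.
  - by apply: (frv_lt j0 H1 hs h _ Ev) => d /hD2 /andP[].
  - by apply: (frv_lt j0 H1' hs2 h _ (fun i => esym (Ev i))) => d /hD /andP[].
subst s2; congr pair; apply/setP => e.
case: (boolP ((0 < e <= n) && ((e : nat) != s))) => he.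
  case/andP: he => /andP[he1 he2] he3.
  have hi : (e : nat).-1 < n by lia.
  have := Ev (Ordinal hi); rewrite /= prednK; last by lia.
  rewrite /frv (negbTE he3) inord_val.
  by case: (_ \in D); case: (_ \in D2).
have nD : e \notin D.
  by apply/negP => /hD h; move: he; have := H2 e; lia.
have nD2 : e \notin D2.
  by apply/negP => /hD2 h; move: he; lia.
by rewrite (negbTE nD) (negbTE nD2).
Qed.

Lemma repP o n : n < N ->
  pdcount o n = #|[set D : {set 'I_N} | dgood o D && (sumD D == n)]|.
Proof.
move=> hn; set G := [set D : {set 'I_N} | _].
rewrite /pdcount.
have hfacts : forall D, D \in G -> forall d : 'I_N, d \in D -> 0 < d <= n /\ odd d = o.
  move=> D; rewrite inE => /andP[/dgoodP Hg /eqP H4] d hd.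
  have [h1 h2] := Hg d hd; have := sumD_ge hd; split => //; lia.
have -> : [set m : mpart n | distinct_par o m] = [set fr n 0 0 D | D in G].
  apply/setP => m; rewrite inE; apply/idP/imsetP.
  - case/andP => Hp /forallP Hm.
    set D := [set e : 'I_N | [exists i : 'I_n, (0 < m i) && ((e : nat) == i.+1)]].
    have memD : forall i : 'I_n, ((inord i.+1 : 'I_N) \in D) = (0 < m i).
      move=> i; rewrite inE; apply/existsP/idP => [[i' /andP[h2 /eqP h3]]|h2].
        have ei : i = i'.
          apply/val_inj; move: h3; rewrite inordN; first by move=> [].
          by move: (ltn_ord i); lia.
        by subst i'.
      exists i; rewrite h2 inordN ?eqxx //; by move: (ltn_ord i); lia.
    have hD : forall d : 'I_N, d \in D -> 0 < d <= n.
      move=> d; rewrite inE => /existsP [i /andP[h2 /eqP ->]].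
      by move: (ltn_ord i); lia.
    have mE : forall i : 'I_n, (m i : nat) = frv 0 0 D i.+1.
      move=> i; rewrite /frv memD /=; have /andP[h1 _] := Hm i.
      by move: h1; case: (m i : nat) => [|[|]].
    exists D; last first.
      by apply/ffunP => i; apply/val_inj; rewrite /= fr_val.
    rewrite inE; apply/andP; split.
      apply/dgoodP => d hd; split; first by have := hD d hd; lia.
      move: hd; rewrite inE => /existsP [i /andP[h2 /eqP ->]].
      by have /andP[_ /implyP /(_ h2) /eqP] := Hm i.
    apply/eqP; have := @fr_sum n 0 0 D hn (leq0n n).
    rewrite mul0n add0n => <-; last by move=> d /hD.
    transitivity (\sum_(i < n) i.+1 * (m i : nat)); last exact/eqP.
    by apply: eq_bigr => i _; rewrite mE.
  - move=> [D HD ->].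
    have hD := hfacts D HD.
    move: HD; rewrite inE => /andP[_ /eqP H4].
    apply/andP; split.
      rewrite /is_partition (eq_bigr (fun i : 'I_n => i.+1 * frv 0 0 D i.+1)); last first.
        by move=> i _; rewrite fr_val.
      rewrite fr_sum // ?H4 //; move=> d /hD [h1 _]; lia.
    apply/forallP => i; rewrite fr_val // /frv /=.
    case: (boolP (_ \in D)) => //= Hin.
    have [_] := hD _ Hin; rewrite inordN; last by move: (ltn_ord i); lia.
    by move=> /= ->; rewrite eqxx.
apply: card_in_imset => D D2 HD HD2 E.
have hD := hfacts D HD; have hD2 := hfacts D2 HD2.
have Ev : forall i : 'I_n, frv 0 0 D i.+1 = frv 0 0 D2 i.+1.
  by move=> i; rewrite -!fr_val // E.
apply/setP => e.
case: (boolP (0 < e <= n)) => he.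
  case/andP: he => he1 he2.
  have hi : (e : nat).-1 < n by lia.
  have := Ev (Ordinal hi); rewrite /= prednK // /frv (gtn_eqF he1) inord_val.
  by case: (_ \in D); case: (_ \in D2).
have nD : e \notin D by apply/negP => /hD [h _]; move: he; rewrite h.
have nD2 : e \notin D2 by apply/negP => /hD2 [h _]; move: he; rewrite h.
by rewrite (negbTE nD) (negbTE nD2).
Qed.

End W.

Lemma split3 N' j b a :
  #|SB N' j b 0 a| =
  #|[set x in SB N' j b 0 a | x.1 == 1 :> nat]|
  + #|[set x in SB N' j b 0 a | x.1 == 2 :> nat]|
  + #|[set x in SB N' j b 0 a | 2 < x.1]|.
Proof.
set A := SB N' j b 0 a.
rewrite -(cardsID [set x : ('I_N'.+1 * {set 'I_N'.+1})%type | x.1 == 1 :> nat] A).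
rewrite -(cardsID [set x : ('I_N'.+1 * {set 'I_N'.+1})%type | x.1 == 2 :> nat]
                  (A :\: [set x : ('I_N'.+1 * {set 'I_N'.+1})%type | x.1 == 1 :> nat])).
rewrite addnA; congr (_ + _ + _); apply: eq_card => -[s D]; rewrite !inE /=.
- by [].
- case: (val s =P 2) => [->|_]; rewrite ?andbT ?andbF //.
- case Hs: (sgood _ _ _); last by rewrite !andbF.
  move/sgoodP: Hs => [H1 _ _]; case: (_ == a); rewrite ?andbF ?andbT //=.
  by apply/idP/idP => [/andP[h1 h2]|h]; [lia | apply/andP; split; lia].
Qed.

Lemma cardSB N' b j c a : 0 < j -> a < N'.+1 ->
  #|SB N' j b c a| = (if c <= a then Bcount b j (a - c) else 0).
Proof.
move=> j0 ha; case: leqP => hc.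
  rewrite (repB b j0 (_ : a - c < N'.+1)); last by lia.
  by apply: eq_card => x; rewrite !inE; congr andb; apply/eqP/eqP; lia.
apply/eqP; rewrite cards_eq0; apply/eqP/setP => x; rewrite !inE.
by apply/negbTE/negP => /andP[_ /eqP]; lia.
Qed.

Lemma cardPD N' o c a : a < N'.+1 ->
  #|PD N' o c a| = (if c <= a then pdcount o (a - c) else 0).
Proof.
move=> ha; case: leqP => hc.
  rewrite (repP o (_ : a - c < N'.+1)); last by lia.
  by apply: eq_card => x; rewrite !inE; congr andb; apply/eqP/eqP; lia.
apply/eqP; rewrite cards_eq0; apply/eqP/setP => x; rewrite !inE.
by apply/negbTE/negP => /andP[_ /eqP]; lia.
Qed.

Lemma subz_cases (a c : nat) :
  (a%:Z - c%:Z)%R = (if c <= a then Posz (a - c) else Negz (c - a).-1).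
Proof.
case: leqP => h; first by rewrite subzn.
by rewrite NegzE prednK ?subn_gt0 //; lia.
Qed.

Theorem lemma4 (k t : nat) (hk : (1 <= k)%N) (ht : (1 <= t)%N) :
  (B0 k (2 * t)%N%:Z + B1 k.+1 (2 * t + 1)%N%:Z
   = B0 k ((2 * t)%:Z - (2 * k)%:Z)%R
     + pde ((2 * t)%:Z - k%:Z)%R
     + pdo ((2 * t)%:Z - (2 * k)%:Z)%R)%N.
Proof.
pose N' := (2 * t).+1.
have ha : 2 * t < N'.+1 by rewrite /N'; lia.
have e1 : B0 k (2 * t)%N%:Z = #|SB N' k false 0 (2 * t)|.
  by rewrite cardSB //= subn0.
have e2 : B1 k.+1 (2 * t + 1)%N%:Z = #|SB N' k.+1 true 0 (2 * t).+1|.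
  by rewrite cardSB //= ?subn0 ?addn1 //; rewrite /N'; lia.
have e3 : B0 k ((2 * t)%:Z - (2 * k)%:Z)%R = #|SB N' k false (2 * k) (2 * t)|.
  by rewrite cardSB // subz_cases; case: ifP.
have e4 : pde ((2 * t)%:Z - k%:Z)%R = #|PD N' false k (2 * t)|.
  by rewrite cardPD // subz_cases; case: ifP.
have e5 : pdo ((2 * t)%:Z - (2 * k)%:Z)%R = #|PD N' true (2 * k) (2 * t)|.
  by rewrite cardPD // subz_cases; case: ifP.
rewrite e1 e2 e3 e4 e5 !split3.
rewrite -(@comb1 N' k (2 * t)); last by rewrite /N'; lia.
rewrite -(@comb2 N' k (2 * t)); first last.
  - by rewrite oddM.
  - by rewrite /N'; lia.
rewrite -(comb3 (N' := N') (k := k) (a := 2 * t)) //.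
lia.
Qed.
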